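(* Let $f:\mathbb{R}\to\mathbb{R}\cup\{\pm\infty\}$ be a proper concave function such that $f(\delta)\le 0$ and $\partial f(\delta)\cap\mathbb{R}_{<0}\neq\emptyset$ for some $\delta\in\operatorname{dom}(f)$, and such that $f$ has a root or attains its maximum. Let $\delta^*:=\max\big(\{\delta: f(\delta)=0\}\cup\operatorname{argmax} f\big)$. Run the look-ahead Newton–Dinkelbach method (described in the context) on $f$ from a valid initial pair $(\delta^{(1)},g^{(1)})$. Then for every iteration $i>2$ (i.e. whenever $\delta^{(i)}$ is defined with $i\ge 3$), \[ D_f(\delta^*,\delta^{(i)}) < \tfrac12\, D_f(\delta^*,\delta^{(i-2)}). \]
   Context: For a proper concave $f$, $\operatorname{dom}(f):=\{x:-\infty<f(x)<\infty\}$ and $\partial f(x_0):=\{g: f(x)\le f(x_0)+g(x-x_0)\ \forall x\in\mathbb{R}\}$ (supergradients). Bregman divergence: for $\delta,\delta'\in\operatorname{dom}(f)$ with $\partial f(\delta)\ne\emptyset$, $D_f(\delta',\delta):=f(\delta)+\sup_{g\in\partial f(\delta)} g(\delta'-\delta)-f(\delta')$ if $\delta\ne\delta'$, and $D_f(\delta,\delta):=0$. Look-ahead Newton–Dinkelbach method (Algorithm 1): it has an oracle that, given $\delta$, returns $f(\delta)$ and, if $f(\delta)>-\infty$, some (arbitrary) $g\in\partial f(\delta)$. Input: $\delta^{(1)}\in\operatorname{dom}(f)$ and $g^{(1)}\in\partial f(\delta^{(1)})$ with $f(\delta^{(1)})\le 0$ and $g^{(1)}<0$. For $i=1,2,\dots$: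 if $f(\delta^{(i)})=0$, return $\delta^{(i)}$. Otherwise set $\delta:=\delta^{(i)}-f(\delta^{(i)})/g^{(i)}$ and query $g\in\partial f(\delta)$; if $f(\delta)=-\infty$, or $f(\delta)<0$ and $g\ge 0$, return NO ROOT. Then set $\delta':=2\delta-\delta^{(i)}$ and query $g'\in\partial f(\delta')$; if $-\infty<f(\delta')<0$ and $g'<0$, replace $(\delta,g)$ by $(\delta',g')$. Set $\delta^{(i+1)}:=\delta$, $g^{(i+1)}:=g$. ''Iteration $i$'' is the iteration starting with the current pair $(\delta^{(i)},g^{(i)})$. *)

(* Defs.v *)
From HB Require Import structures.
From mathcomp Require Import all_boot all_order all_algebra.
From mathcomp Require Import all_classical all_reals ereal.
Set Implicit Arguments. Unset Strict Implicit. Unset Printing Implicit Defensive.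
Import Order.TTheory GRing.Theory Num.Theory.
Local Open Scope classical_set_scope.
Local Open Scope ring_scope.

Section Defs.
Variable R : realType.
Implicit Types (f : R -> \bar R) (x y t g : R).

Definition in_dom f x : Prop := f x \is a fin_num.

Definition proper_fun f : Prop :=
  (forall x, f x != +oo%E) /\ (exists x, in_dom f x).

(* concavity (hypograph convex); for a proper f it suffices to test points
   of the domain *)
Definition concave_fun f : Prop :=
  forall x y t, in_dom f x -> in_dom f y -> (0 < t < 1)%R ->
    (t%:E * f x + (1 - t)%R%:E * f y <= f (t * x + (1 - t) * y)%R)%E.

Definition supergrad f x0 g : Prop :=
  forall x, (f x <= f x0 + (g * (x - x0))%R%:E)%E.

Definition is_root f x : Prop := f x = 0%E.
Definition is_argmax f x : Prop := forall y, (f y <= f x)%E.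

Definition bregman f (d' d : R) : \bar R :=
  if d' == d then 0%E
  else (f d + ereal_sup [set (g * (d' - d))%R%:E | g in supergrad f d] - f d')%E.

(* The oracle answers
   (gn at the Newton point, gl at the look-ahead point) are arbitrary
   supergradients. *)
Definition landn_step f (d gd d' gd' : R) : Prop :=
  f d <> 0%E /\
  let dn := d - fine (f d) / gd in
  exists gn, in_dom f dn /\ supergrad f dn gn /\
    ~ (fine (f dn) < 0 /\ 0 <= gn) /\
    let dl := 2 * dn - d in
    exists gl, (in_dom f dl -> supergrad f dl gl) /\
      ((in_dom f dl /\ fine (f dl) < 0 /\ gl < 0 /\ d' = dl /\ gd' = gl) \/
       (~ (in_dom f dl /\ fine (f dl) < 0 /\ gl < 0) /\ d' = dn /\ gd' = gn)).

End Defs.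

(* Main.v *)
Require Import Defs.
From HB Require Import structures.
From mathcomp Require Import all_boot all_order all_algebra.
From mathcomp Require Import all_classical all_reals ereal.
From mathcomp Require Import ring lra zify.
Import Order.TTheory GRing.Theory Num.Theory.
Local Open Scope classical_set_scope.
Local Open Scope ring_scope.

Lemma dom_fin {R : realType} {f : R -> \bar R} {x} : in_dom f x -> f x = (fine (f x))%:E.
Proof. by move=> h; rewrite fineK. Qed.

Lemma sg_real {R : realType} {f : R -> \bar R} {x y g} :
  in_dom f x -> in_dom f y -> supergrad f x g ->
  fine (f y) <= fine (f x) + g * (y - x).
Proof.
move=> hx hy hg; have := hg y.
by rewrite (dom_fin hx) (dom_fin hy) -EFinD lee_fin.
Qed.

Lemma conc_real {R : realType} {f : R -> \bar R} {a b z} :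
  proper_fun f -> concave_fun f -> in_dom f a -> in_dom f b -> a < z -> z < b ->
  in_dom f z /\ (b - z) * fine (f a) + (z - a) * fine (f b) <= (b - a) * fine (f z).
Proof.
move=> [hpinf _] hc ha hb haz hzb.
have hba : 0 < b - a by lra.
set t := (b - z) / (b - a).
have ht0 : 0 < t by rewrite divr_gt0 //; lra.
have ht1 : t < 1 by rewrite /t ltr_pdivrMr //; lra.
have hz : t * a + (1 - t) * b = z.
  rewrite /t; field; lra.
have := hc a b t ha hb; rewrite ht0 ht1 => /(_ isT); rewrite hz.
rewrite (dom_fin ha) (dom_fin hb) -!EFinM -EFinD.
case Ez: (f z) => [r| |].
- move=> hle; split; first by rewrite /in_dom Ez.
  rewrite /=; move: hle; rewrite lee_fin => hle.
  have e : (b - z) * fine (f a) + (z - a) * fine (f b) =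
           (b - a) * (t * fine (f a) + (1 - t) * fine (f b)).
    by rewrite /t; field; lra.
  by rewrite e ler_wpM2l //; lra.
- by move: (hpinf z); rewrite Ez.
- by rewrite leeNy_eq.
Qed.

Lemma seg_dom {R : realType} {f : R -> \bar R} {a b z} :
  proper_fun f -> concave_fun f -> in_dom f a -> in_dom f b -> a <= z -> z <= b ->
  in_dom f z.
Proof.
move=> hp hc ha hb; rewrite le_eqVlt => /orP [/eqP <- //|haz].
rewrite le_eqVlt => /orP [/eqP -> //|hzb].
by case: (conc_real hp hc ha hb haz hzb).
Qed.

Lemma ivt {R : realType} {f : R -> \bar R} {a b g} :
  proper_fun f -> concave_fun f -> a < b -> in_dom f a -> in_dom f b ->
  0 <= fine (f a) -> fine (f b) < 0 -> supergrad f b g ->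
  exists r, a <= r /\ r < b /\ f r = 0%E.
Proof.
move=> hp hc hab ha hb hfa hfb hg.
set S := [set z | a <= z <= b /\ 0 <= fine (f z)].
have Sa : S a by split => //; rewrite lexx /=; apply/ltW.
have ubS : ubound S b by move=> z [/andP[_ ->]].
have hs : has_sup S by split; [exists a | exists b].
have zdom : forall z, S z -> in_dom f z.
  by move=> z [/andP[h1 h2] _]; apply: (seg_dom hp hc ha hb h1 h2).
have hgz : forall z, S z -> 0 <= fine (f b) + g * (z - b).
  move=> z Sz; apply: le_trans (sg_real hb (zdom z Sz) hg).
  by case: Sz.
have hgneg : g < 0 by have := hgz a Sa; nra.
have ubS2 : ubound S (b + fine (f b) / (- g)).
  move=> z Sz; have := hgz z Sz => h.
  have : z - b <= fine (f b) / (- g) by rewrite ler_pdivlMr; nra.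
  lra.
set c := sup S.
have hac : a <= c by apply: sup_upper_bound.
have hcb' : c <= b + fine (f b) / (- g) by apply: ge_sup => //; exists a.
have hneg2 : fine (f b) / (- g) < 0 by rewrite ltr_pdivrMr; nra.
have hcb : c < b by lra.
have hcdom : in_dom f c by apply: (seg_dom hp hc ha hb) => //; apply: ltW.
have fc_ge : 0 <= fine (f c).
  rewrite leNgt; apply/negP => hneg.
  have hca : a < c.
    rewrite lt_neqAle hac andbT; apply/negP => /eqP eac.
    by move: hfa; rewrite eac; lra.
  set eps := ((b - c) * (- fine (f c))) / (- fine (f b)).
  have heps : 0 < eps by rewrite divr_gt0 // ?mulr_gt0; lra.
  have heps2 : eps * (- fine (f b)) = (b - c) * (- fine (f c)).
    by rewrite /eps; field; lra.
  have [z Sz hz] := sup_adherent heps hs; rewrite -/c in hz.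
  have hzc : z <= c by apply: sup_upper_bound.
  move: hzc; rewrite le_eqVlt => /orP [/eqP ezc|hzc].
    by move: Sz => [_]; rewrite ezc; lra.
  have [_ hconc] := conc_real hp hc (zdom z Sz) hb hzc hcb.
  have hfz : 0 <= fine (f z) by case: Sz.
  have h1 : (c - z) * (- fine (f b)) < eps * (- fine (f b)).
    by rewrite ltr_pM2r; lra.
  have h2 : (b - z) * fine (f c) <= (b - c) * fine (f c).
    by rewrite ler_wnM2r //; lra.
  have h3 : 0 <= (b - c) * fine (f z) by rewrite mulr_ge0 //; lra.
  lra.
have fc_le : fine (f c) <= 0.
  rewrite leNgt; apply/negP => hpos.
  set t := fine (f c) / (fine (f c) - fine (f b)) / 2.
  have ht0 : 0 < t by rewrite /t !divr_gt0 //; lra.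
  have ht1 : t < 1 by rewrite /t ltr_pdivrMr // ltr_pdivrMr; lra.
  set z := c + t * (b - c).
  have hcz : c < z by rewrite /z ltrDl mulr_gt0 //; lra.
  have hzb : z < b.
    have : t * (b - c) < 1 * (b - c) by rewrite ltr_pM2r //; lra.
    rewrite /z; lra.
  have [hzdom hconc] := conc_real hp hc hcdom hb hcz hzb.
  have key : (b - z) * fine (f c) + (z - c) * fine (f b) = (b - c) * (fine (f c) / 2).
    by rewrite /z /t; field; lra.
  rewrite key in hconc.
  have hfz : fine (f c) / 2 <= fine (f z) by move: hconc; rewrite ler_pM2l //; lra.
  have Sz : S z by split; [apply/andP; split; lra | lra].
  have := sup_upper_bound hs Sz; rewrite -/c; lra.
exists c; split => //; split => //.
by rewrite (dom_fin hcdom); congr (_%:E); apply/eqP; rewrite eq_le fc_le fc_ge.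
Qed.

Lemma breg_lower {R : realType} {f : R -> \bar R} {ds x g} :
  in_dom f x -> in_dom f ds -> ds != x -> supergrad f x g ->
  ((fine (f x) + g * (ds - x) - fine (f ds))%:E <= bregman f ds x)%E.
Proof.
move=> hx hds hne hg; rewrite /bregman (negbTE hne).
move: (dom_fin hx) (dom_fin hds); set u := fine (f x); set v := fine (f ds).
move=> -> ->.
rewrite EFinB EFinD; apply: leeD2r; apply: leeD2l.
by apply: ereal_sup_ubound; exists g.
Qed.

Lemma breg_upper {R : realType} {f : R -> \bar R} {ds y c} :
  in_dom f y -> in_dom f ds -> ds != y -> ds <= y ->
  (forall g', supergrad f y g' -> c <= g') ->
  (bregman f ds y <= (fine (f y) + c * (ds - y) - fine (f ds))%:E)%E.
Proof.
move=> hy hds hne hle hc; rewrite /bregman (negbTE hne).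
move: (dom_fin hy) (dom_fin hds); set u := fine (f y); set v := fine (f ds).
move=> -> ->.
rewrite EFinB EFinD; apply: leeD2r; apply: leeD2l.
apply: ge_ereal_sup => _ [g' hg' <-]; rewrite lee_fin.
have := hc g' hg'; nra.
Qed.

Lemma le_fs {R : realType} {f : R -> \bar R} {ds y} :
  (is_root f ds \/ is_argmax f ds) -> in_dom f ds -> in_dom f y ->
  fine (f y) <= 0 -> fine (f y) <= fine (f ds).
Proof.
move=> [hr|ha] hds hy hy0; first by rewrite hr.
by have := ha y; rewrite -(fineK hy) -(fineK hds) lee_fin.
Qed.

Lemma step_facts {R : realType} {f : R -> \bar R} {ds x g x' g'} :
  proper_fun f -> concave_fun f -> (is_root f ds \/ is_argmax f ds) ->
  (forall z, is_root f z \/ is_argmax f z -> z <= ds) -> in_dom f ds ->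
  in_dom f x -> supergrad f x g -> fine (f x) <= 0 -> ds <= x -> g < 0 ->
  landn_step f x g x' g' ->
  ds < x /\ fine (f x) < 0 /\ in_dom f x' /\ supergrad f x' g' /\
  fine (f x') <= 0 /\ ds <= x' /\ (fine (f x') < 0 -> g' < 0) /\
  (((ds != x' -> (bregman f ds x' <=
        (fine (f x') + (fine (f x) + g * (ds - x) - fine (f ds)))%:E)%E)
     /\ fine (f x) + g * (ds - x) - fine (f ds) <= - fine (f x) - fine (f ds))
   \/ (fine (f x') < 0 /\ (ds != x' -> (bregman f ds x' <=
        (fine (f x') + ((fine (f x) + g * (ds - x) - fine (f ds))
                         + fine (f x) - fine (f ds)) / 2)%:E)%E))).
Proof.
move=> hp hc hstar hmax hds hx hg; rewrite /landn_step /=.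
set u := fine (f x); set fs := fine (f ds).
move=> hfx hdx hgneg [hf0 [gn [hNdom [hNsg [hNno [gl [hAsg hcase]]]]]]].
have hu : u < 0.
  rewrite lt_neqAle hfx andbT; apply/negP => /eqP e; apply: hf0.
  by rewrite (dom_fin hx) -/u e.
move: hNdom hNsg hNno hAsg hcase.
set h := u / g; set N := x - h; set A := 2 * N - x.
move=> hNdom hNsg hNno hAsg hcase.
have hh : 0 < h by rewrite /h -mulrNN -invrN divr_gt0 // oppr_gt0.
have ghu : g * h = u by rewrite /h mulrC divfK // ltr0_neq0.
have hN0 : fine (f N) <= 0.
  have := sg_real hx hNdom hg; rewrite -/u /N; nra.
have hdN : ds <= N.
  case: (lerP 0 fs) => hfs.
  - have := sg_real hx hds hg; rewrite -/u -/fs /N; nra.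
  - case: hstar => [hr|ham]; first by move: hfs; rewrite /fs hr /=; lra.
    have hNfs : fine (f N) <= fs by have := ham N; rewrite -(fineK hNdom) -(fineK hds) lee_fin.
    have hgn : gn < 0.
      rewrite ltNge; apply/negP => hg0; apply: hNno; split => //; lra.
    rewrite leNgt; apply/negP => hNds.
    have := sg_real hNdom hds hNsg; rewrite -/fs; nra.
have hNx : N < x by rewrite /N; lra.
have hdx' : ds < x by lra.
case: hcase => [[hAdom [hAneg [hglneg [-> ->]]]] | [hnot [-> ->]]].
- have hAsg' := hAsg hAdom.
  have hdA : ds <= A.
    rewrite leNgt; apply/negP => hAd.
    have := sg_real hAdom hds hAsg'; have := le_fs hstar hds hAdom (ltW hAneg).
    rewrite -/fs; nra.
  do 7 (split; first by [|lra|move=> *]).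
  right; split => // hne.
  apply: le_trans (breg_upper (c := g / 2) hAdom hds hne hdA _) _.
    move=> g'' hg''; have := sg_real hAdom hx hg''; rewrite -/u /A /N; nra.
  rewrite lee_fin -/fs /A /N; nra.
- have hdA : A <= ds.
    rewrite leNgt; apply/negP => hdA.
    have hAx : A < x by rewrite /A; lra.
    have hAdom : in_dom f A by apply: (seg_dom hp hc hds hx); lra.
    have hAneg : fine (f A) < 0.
      rewrite ltNge; apply/negP => hA0.
      have [r [hr1 [hr2 hr3]]] := ivt hp hc hAx hAdom hx hA0 hu hg.
      have := hmax r (or_introl hr3); lra.
    have hAfs : fine (f A) < fs.
      case: hstar => [hr|ham]; first by rewrite /fs hr.
      have := ham A; rewrite -(fineK hAdom) -(fineK hds) lee_fin /= -/fs => hle.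
      rewrite lt_neqAle hle andbT; apply/negP => /eqP e.
      have : is_argmax f A.
        move=> y; rewrite (dom_fin hAdom) e /fs -(dom_fin hds); exact: ham.
      by move=> hAm; have := hmax A (or_intror hAm); lra.
    have hAsg' := hAsg hAdom.
    have hgl : gl < 0 by have := sg_real hAdom hds hAsg'; rewrite -/fs; nra.
    by apply: hnot.
  do 6 (split; first by [|lra]).
  split.
    move=> hN; rewrite ltNge; apply/negP => hg0; apply: hNno; split => //.
  left; split.
  + move=> hne.
    apply: le_trans (breg_upper (c := g) hNdom hds hne hdN _) _.
      move=> g'' hg''; have := sg_real hNdom hx hg''; rewrite -/u /N; nra.
    rewrite lee_fin -/fs /N; nra.
  + move: hdA; rewrite /A /N; nra.
Qed.

Theorem lemma3p4 (R : realType) (f : R -> \bar R)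
  (hproper : proper_fun f) (hconc : concave_fun f)
  (hneg : exists d, in_dom f d /\ (f d <= 0)%E /\ exists g, supergrad f d g /\ g < 0)
  (hroot : (exists x, is_root f x) \/ (exists x, is_argmax f x))
  (dstar : R)
  (hdstar : (is_root f dstar \/ is_argmax f dstar) /\
            forall x, is_root f x \/ is_argmax f x -> x <= dstar)
  (delta gam : nat -> R) (n : nat)
  (hinit_dom : in_dom f (delta 1%N))
  (hinit_g : supergrad f (delta 1%N) (gam 1%N))
  (hinit_f : (f (delta 1%N) <= 0)%E) (hinit_neg : gam 1%N < 0)
  (hrun : forall i : nat, (1 <= i)%N -> (i < n)%N ->
            landn_step f (delta i) (gam i) (delta i.+1) (gam i.+1)) :
  forall i : nat, (3 <= i)%N -> (i <= n)%N ->
    (bregman f dstar (delta i) < (2^-1)%:E * bregman f dstar (delta (i - 2)%N))%E.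
Proof.
move=> i hi3 hin.
have [hr0 hmax] := hdstar.
have hds : in_dom f dstar.
  case: hr0 => [hr|ham]; first by rewrite /in_dom hr.
  have [hpinf [y0 hy0]] := hproper.
  rewrite /in_dom; case E: (f dstar) => [r| |] //.
  - by have := hpinf dstar; rewrite E.
  - by have := ham y0; rewrite E leeNy_eq (dom_fin hy0).
have inv : forall k, (1 <= k)%N -> (k <= n)%N ->
    in_dom f (delta k) /\ supergrad f (delta k) (gam k) /\
    fine (f (delta k)) <= 0 /\ dstar <= delta k /\ ((k < n)%N -> gam k < 0).
  elim=> [//|k IH] hk hkn.
  case: k IH hk hkn => [|k] IH _ hkn.
  - have hf1 : fine (f (delta 1%N)) <= 0.
      by move: hinit_f; rewrite -(fineK hinit_dom) lee_fin /=.
    do 3 (split => //).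
    split => //.
    rewrite leNgt; apply/negP => h.
    have := sg_real hinit_dom hds hinit_g.
    have := le_fs hr0 hds hinit_dom hf1; nra.
  - have [dk [sgk [fk [ddk gk]]]] := IH isT (ltnW hkn).
    have := step_facts hproper hconc hr0 hmax hds dk sgk fk ddk (gk hkn) (hrun k.+1 isT hkn).
    move=> [_ [_ [dk1 [sgk1 [fk1 [ddk1 [gimp _]]]]]]].
    do 4 (split => //).
    move=> hlt; apply: gimp.
    have [hne _] := hrun k.+2 isT hlt.
    rewrite lt_neqAle fk1 andbT; apply/negP => /eqP e; apply: hne.
    by rewrite (dom_fin dk1) e.
have [j ej] : exists j, i = j.+2 by exists (i - 2)%N; lia.
subst i.
have -> : (j.+2 - 2 = j)%N by lia.
have hj1 : (1 <= j)%N by lia.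
have [dj [sgj [fj [ddj gj]]]] := inv j hj1 (ltnW (ltnW hin)).
have := step_facts hproper hconc hr0 hmax hds dj sgj fj ddj (gj (ltnW hin)) (hrun j hj1 (ltnW hin)).
move=> [hdx0 [hf0 [dj1 [sgj1 [fj1 [ddj1 [_ case1]]]]]]].
have [_ [_ [_ [_ gj1]]]] := inv j.+1 isT (ltnW hin).
have := step_facts hproper hconc hr0 hmax hds dj1 sgj1 fj1 ddj1 (gj1 hin) (hrun j.+1 isT hin).
move=> [hdx1 [hf1 [dj2 [sgj2 [fj2 [ddj2 [_ case2]]]]]]].
set fs := fine (f dstar) in case1 case2 *.
set l0 := fine (f (delta j)) + gam j * (dstar - delta j) - fs in case1 *.
set l1 := fine (f (delta j.+1)) + gam j.+1 * (dstar - delta j.+1) - fs in case2 *.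
have L0 : (l0%:E <= bregman f dstar (delta j))%E.
  exact: (breg_lower dj hds (negbT (lt_eqF hdx0)) sgj).
have L1 : (l1%:E <= bregman f dstar (delta j.+1))%E.
  exact: (breg_lower dj1 hds (negbT (lt_eqF hdx1)) sgj1).
have hne1 : dstar != delta j.+1 := negbT (lt_eqF hdx1).
have l1pos : 0 <= l1 by have := sg_real dj1 hds sgj1; rewrite /l1 -/fs; lra.
have ph0 := le_fs hr0 hds dj fj; have ph1 := le_fs hr0 hds dj1 fj1.
rewrite -/fs in ph0 ph1.
have c1 : (l1 <= fine (f (delta j.+1)) + l0 /\ l0 <= - fine (f (delta j)) - fs) \/
          l1 <= fine (f (delta j.+1)) + (l0 + fine (f (delta j)) - fs) / 2.
  case: case1 => [[hb hl]|[_ hb]]; [left|right].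
  - by split => //; rewrite -lee_fin; apply: le_trans L1 (hb hne1).
  - by rewrite -lee_fin; apply: le_trans L1 (hb hne1).
suff H : (bregman f dstar (delta j.+2) < (l0 / 2)%:E)%E.
  apply: lt_le_trans H _.
  by rewrite mulrC EFinM; apply: lee_wpmul2l => //.
have [e2|ne2] := eqVneq dstar (delta j.+2).
  rewrite /bregman e2 eqxx lte_fin.
  by case: c1 => [[? ?]|?]; lra.
have ph2 := le_fs hr0 hds dj2 fj2; rewrite -/fs in ph2.
have f2neg : fine (f (delta j.+2)) < 0.
  rewrite lt_neqAle fj2 andbT; apply/negP => /eqP e.
  have hroot2 : is_root f (delta j.+2) by rewrite /is_root (dom_fin dj2) e.
  have := hmax _ (or_introl hroot2) => hle.
  by move: ne2; rewrite eq_le hle ddj2.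
case: case2 => [[hb hl]|[_ hb]]; apply: le_lt_trans (hb ne2) _; rewrite lte_fin;
  by case: c1 => [[? ?]|?]; lra.
Qed.
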